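(* Let $m,\hat m\in\mathbb{N}$ and $\bar m=m+\hat m$. Then (i) $$\sum_{M}p^{|\bigcup_{\Gamma\in M}\Gamma|}\le c_m\frac{n^{m v_{G_0}}p^{m e_{G_0}}}{\Psi_{\min}^{m-1}},$$ where the sum runs over all sets of connected copies $M$ of size $m$; (ii) $$\sum_{M,\hat M}p^{|\bigcup_{\Gamma\in M\cup\hat M}\Gamma|}\le c_{\bar m}\frac{n^{\bar m v_{G_0}}p^{\bar m e_{G_0}}}{\Psi_{\min}^{\bar m-2}\min\{\Psi_{\min},1\}},$$ where the sum runs over all pairs of a set of connected copies $M$ of size $m$ and a set of connected copies $\hat M$ of size $\hat m$. Here $c_k:=(v_{G_0}!)^{k-1}\,2^{\frac12k(k-1)e_{G_0}}\,\operatorname{aut}(G_0)^{-k}$ for $k\in\mathbb{N}$.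
   Context: $G_0$ is a graph with at least one edge and no isolated vertices; $v_H,e_H,\operatorname{aut}(H)$ denote the numbers of vertices, edges and automorphisms of a graph $H$. $E$ is the set of edges of the complete graph $K_n$ and $p\in(0,1)$. $\mathcal{M}$ is the set of all $\Gamma\subset E$ such that the graph consisting of the edges $\Gamma$ and their endpoints is isomorphic to $G_0$ (copies of $G_0$). For $\Gamma\in\mathcal{M}$, the neighborhood $\mathcal{M}_\Gamma$ is the set of $\Gamma'\in\mathcal{M}$ with $\Gamma'\cap\Gamma\neq\emptyset$. A set of connected copies of size $m$ is a sequence $M=(\Gamma_1,\dots,\Gamma_m)$ with $\Gamma_1\in\mathcal{M}$ and $\Gamma_i\in\bigcup_{j<i}\mathcal{M}_{\Gamma_j}$ for $2\le i\le m$. $\Psi_{\min}=\min\{n^{v_H}p^{e_H}:H\subset G_0,\ e_H\ge1\}$. *)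

(* Defs.v *)
From mathcomp Require Import all_boot all_order all_algebra all_fingroup.
Set Implicit Arguments. Unset Strict Implicit. Unset Printing Implicit Defensive.
Import Order.TTheory GRing.Theory Num.Theory.

(* The graph G_0 is given by a finite vertex type V0 and an edge set
   E0 : {set {set V0}} (each edge a 2-element subset of V0). *)

Definition Kn_edges (n : nat) : {set {set 'I_n}} :=
  [set e | #|(e : {set 'I_n})| == 2%N].

Definition is_copy (V0 : finType) (E0 : {set {set V0}}) (n : nat)
  (Gam : {set {set 'I_n}}) : bool :=
  (Gam \subset Kn_edges n) &&
  [exists f : {ffun V0 -> 'I_n},
     [&& injectiveb f,
         f @: [set: V0] == \bigcup_(e in Gam) e &
         [forall x, forall y, ([set f x; f y] \in Gam) == ([set x; y] \in E0)]]].

(* M = (Gam_0, ..., Gam_{m-1}) is a set of connected copies of size m: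
   Gam_0 is a copy, and each later Gam_i is a copy meeting some earlier Gam_j. *)
Definition conn_copies (V0 : finType) (E0 : {set {set V0}}) (n m : nat)
  (M : {ffun 'I_m -> {set {set 'I_n}}}) : bool :=
  [forall i : 'I_m,
     is_copy E0 (M i) &&
     ((nat_of_ord i == 0%N) ||
      [exists j : 'I_m, (j < i)%N && (M j :&: M i != set0)])].

Definition union_copies (n m : nat) (M : {ffun 'I_m -> {set {set 'I_n}}})
  : {set {set 'I_n}} := \bigcup_(i < m) M i.

Definition subgraph_ge1 (V0 : finType) (E0 : {set {set V0}})
  (H : {set V0} * {set {set V0}}) : bool :=
  [&& H.2 \subset E0, H.2 != set0 & [forall e in H.2, e \subset H.1]].

Local Open Scope ring_scope.

(* Psi_min = min { n^{v_H} p^{e_H} : H subgraph of G0, e_H >= 1 }.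
   The seed value is the term for H = G0 itself, which belongs to the range. *)
Definition Psi_min (R : realFieldType) (V0 : finType) (E0 : {set {set V0}})
  (n : nat) (p : R) : R :=
  \big[Order.min/ (n%:R ^+ #|V0| * p ^+ #|E0|)]_(H | subgraph_ge1 E0 H)
     (n%:R ^+ #|H.1| * p ^+ #|H.2|).

Definition aut (V0 : finType) (E0 : {set {set V0}}) : nat :=
  #|[set s : perm_of V0 |
      [forall x, forall y, ([set s x; s y] \in E0) == ([set x; y] \in E0)]]|.

Definition c_const (R : realFieldType) (V0 : finType) (E0 : {set {set V0}})
  (k : nat) : R :=
  ((#|V0|)`!%:R) ^+ (k - 1) * 2 ^+ ((k * (k - 1)) %/ 2 * #|E0|)%N
    / (aut E0)%:R ^+ k.

(* Main.v *)
Require Import Defs.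
From mathcomp Require Import all_boot all_order all_algebra.
From mathcomp Require Import fingroup perm.
From mathcomp Require Import zify ring.
Import Order.TTheory GRing.Theory Num.Theory.
Set Implicit Arguments. Unset Strict Implicit. Unset Printing Implicit Defensive.

Definition wp (V0 : finType) (E0 : {set {set V0}}) n (Gam : {set {set 'I_n}})
  (f : {ffun V0 -> 'I_n}) : bool :=
  [&& injectiveb f, f @: [set: V0] == \bigcup_(e in Gam) e &
         [forall x, forall y, ([set f x; f y] \in Gam) == ([set x; y] \in E0)]].

Lemma is_copyE (V0 : finType) (E0 : {set {set V0}}) n (Gam : {set {set 'I_n}}) :
  is_copy E0 Gam = (Gam \subset Kn_edges n) && [exists f, wp E0 Gam f].
Proof. by []. Qed.

Definition imE (V0 : finType) (E0 : {set {set V0}}) n (f : {ffun V0 -> 'I_n}) :=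
  [set [set f x | x in e] | e : {set V0} in E0].

Lemma wp_imE (V0 : finType) (E0 : {set {set V0}}) n (Gam : {set {set 'I_n}}) f
  (HE0 : forall e, e \in E0 -> #|e| = 2) :
  Gam \subset Kn_edges n -> wp E0 Gam f -> Gam = imE E0 f.
Proof.
move=> sub /and3P[_ /eqP im /forallP H].
have key x y : ([set f x; f y] \in Gam) = ([set x; y] \in E0).
  by apply/eqP; exact: (forallP (H x) y).
apply/setP=> e; apply/idP/idP.
- move=> eG; have: #|e| == 2 by move: (subsetP sub e eG); rewrite inE.
  case/cards2P=> a [b [ab De]].
  have ha : a \in f @: [set: V0].
    by rewrite im; apply/bigcupP; exists e => //; rewrite De !inE eqxx.
  have hb : b \in f @: [set: V0].
    by rewrite im; apply/bigcupP; exists e => //; rewrite De !inE eqxx orbT.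
  case/imsetP: ha => x _ ax; case/imsetP: hb => y _ bY.
  apply/imsetP; exists [set x; y]; first by rewrite -key -ax -bY -De.
  by rewrite imsetU1 imset_set1 De ax bY.
- case/imsetP => e0 e0E ->; have /eqP := HE0 _ e0E.
  case/cards2P => x [y [_ De0]].
  by rewrite De0 imsetU1 imset_set1 key -De0.
Qed.

Lemma wp_inj (V0 : finType) (E0 : {set {set V0}}) n (Gam : {set {set 'I_n}}) f :
  wp E0 Gam f -> injective f.
Proof. by case/and3P => /injectiveP. Qed.

Lemma card_copy (V0 : finType) (E0 : {set {set V0}}) n (Gam : {set {set 'I_n}})
  (HE0 : forall e, e \in E0 -> #|e| = 2) :
  is_copy E0 Gam -> #|Gam| = #|E0|.
Proof.
rewrite is_copyE => /andP[sub /existsP[f w]].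
rewrite (wp_imE HE0 sub w) /imE card_imset //.
exact: imset_inj (wp_inj w).
Qed.

Definition autSet (V0 : finType) (E0 : {set {set V0}}) :=
  [set s : perm_of V0 |
      [forall x, forall y, ([set s x; s y] \in E0) == ([set x; y] \in E0)]].

Lemma autE (V0 : finType) (E0 : {set {set V0}}) : aut E0 = #|autSet E0|.
Proof. by []. Qed.

Lemma aut_le_wit (V0 : finType) (E0 : {set {set V0}}) n (Gam : {set {set 'I_n}}) f :
  wp E0 Gam f -> aut E0 <= #|[set g | wp E0 Gam g]|.
Proof.
move=> w; have injf := wp_inj w.
have injC : injective (fun s : {perm V0} => [ffun x => f (s x)]).
  move=> s1 s2 /ffunP H; apply/permP => x; apply: injf.
  by have := H x; rewrite !ffunE.
rewrite autE -(card_imset (autSet E0) injC).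
apply: subset_leq_card; apply/subsetP => g /imsetP[s sA ->]; rewrite inE.
case/and3P: w => _ /eqP im /forallP H.
apply/and3P; split.
- by apply/injectiveP => x y; rewrite !ffunE => /injf /perm_inj.
- rewrite -im; apply/eqP/setP=> z; apply/imsetP/imsetP => [[x _ ->]|[x _ ->]].
    by exists (s x); rewrite ?ffunE.
  by exists ((s^-1)%g x); rewrite ?ffunE ?permKV.
- apply/forallP=> x; apply/forallP=> y; rewrite !ffunE.
  rewrite (eqP (forallP (H (s x)) (s y))).
  by rewrite inE in sA; exact: (forallP (forallP sA x) y).
Qed.

Lemma aut_gt0 (V0 : finType) (E0 : {set {set V0}}) : 0 < aut E0.
Proof.
rewrite autE card_gt0; apply/set0Pn; exists 1%g; rewrite inE.
by apply/forallP=> x; apply/forallP=> y; rewrite !perm1.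
Qed.

Local Close Scope ring_scope.

Lemma sum_bool_card (T : finType) (P : pred T) : \sum_(x : T) (P x : nat) = #|P|.
Proof.
by rewrite -sum1_card [RHS]big_mkcond /=; apply: eq_bigr => x _; rewrite unfold_in; by case: (P x).
Qed.

Lemma card_notin_seq (T : finType) (s : seq T) : #|[pred x | x \notin s]| = #|T| - #|s|.
Proof.
have := cardC [pred x | x \in s].
move=> <-. rewrite addKn. apply: eq_card => x. by rewrite !inE.
Qed.

Lemma card_fix_le (V0 : finType) n (S : {set 'I_n})
  (h : {ffun {s : 'I_n | s \in S} -> V0}) :
  injective h ->
  #|[pred f : {ffun V0 -> 'I_n} | [forall s, f (h s) == val s]]| <= n ^ (#|V0| - #|S|).
Proof.
move=> injh.
pose r (f : {ffun V0 -> 'I_n}) := [ffun y : {x : V0 | x \notin codom h} => f (val y)].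
rewrite -(card_in_imset (f := r)); last first.
  move=> f1 f2; rewrite !inE => /forallP H1 /forallP H2 /ffunP E.
  apply/ffunP => x; case: (boolP (x \in codom h)) => [/codomP [s ->] | nx].
    by rewrite (eqP (H1 s)) (eqP (H2 s)).
  by have := E (exist _ x nx); rewrite !ffunE.
apply: leq_trans (max_card _) _.
rewrite card_ffun card_ord card_sig.
by rewrite card_notin_seq card_codom // card_sig.
Qed.

Lemma card_inj_cover (V0 : finType) n (S : {set 'I_n}) (x0 : V0) :
  #|[pred f : {ffun V0 -> 'I_n} | injectiveb f && (S \subset f @: [set: V0])]|
   <= #|V0| ^_ #|S| * n ^ (#|V0| - #|S|).
Proof.
pose ST := {s : 'I_n | s \in S}.
pose G (f : {ffun V0 -> 'I_n}) := \sum_(h : {ffun ST -> V0} | injectiveb h)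
    ([forall s, f (h s) == val s] : nat).
apply: (@leq_trans (\sum_f G f)).
  rewrite -sum_bool_card; apply: leq_sum => f _.
  rewrite /=; case: (boolP (injectiveb f && _)) => //= /andP[/injectiveP injf sub].
  pose hf := [ffun s : ST => odflt x0 [pick x | f x == val s]].
  have hs s : f (hf s) = val s.
    rewrite ffunE; case: pickP => [x /eqP //| none].
    have : val s \in f @: [set: V0] by apply: (subsetP sub); exact: (valP s).
    by case/imsetP => x _ Ex; have := none x; rewrite Ex eqxx.
  have injhf : injectiveb hf.
    by apply/injectiveP => s1 s2 E; apply: val_inj; rewrite -!hs E.
  rewrite /G (bigD1 hf) //=.
  have -> : [forall s, f (hf s) == val s] by apply/forallP => s; rewrite hs.
  by rewrite leq_addr.
rewrite /G exchange_big /=.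
apply: (@leq_trans (\sum_(h : {ffun ST -> V0} | injectiveb h) n ^ (#|V0| - #|S|))).
  apply: leq_sum => h /injectiveP injh; rewrite sum_bool_card.
  exact: card_fix_le.
rewrite sum_nat_const.
have -> : #|[pred h : {ffun ST -> V0} | injectiveb h]| = #|V0| ^_ #|S|.
  have cST : #|{: ST}| = #|S| by rewrite card_sig; apply: eq_card.
  by rewrite -cST -card_inj_ffuns; apply: eq_card => h; rewrite !inE.
by [].
Qed.

Local Close Scope ring_scope.

Definition NF (V0 : finType) (E0 : {set {set V0}}) n (F : {set {set 'I_n}}) :=
  #|[set Gam : {set {set 'I_n}} | is_copy E0 Gam & F \subset Gam]|.

Lemma NF_bound (V0 : finType) (E0 : {set {set V0}}) n (F : {set {set 'I_n}}) (x0 : V0)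
  (HE0 : forall e, e \in E0 -> #|e| = 2) :
  Defs.aut E0 * NF E0 F <= #|V0| ^_ #|\bigcup_(e in F) e| * n ^ (#|V0| - #|\bigcup_(e in F) e|).
Proof.
set S := \bigcup_(e in F) e.
set C := [set Gam | is_copy E0 Gam & F \subset Gam].
apply: leq_trans (card_inj_cover S x0).
rewrite /NF -/C mulnC -sum_nat_const.
apply: (@leq_trans (\sum_(Gam in C) \sum_g (wp E0 Gam g : nat))).
  apply: leq_sum => Gam; rewrite inE => /andP[cG _].
  move: cG; rewrite is_copyE => /andP[_ /existsP[f w]].
  rewrite sum_bool_card; apply: leq_trans (aut_le_wit w) _.
  by rewrite cardsE.
rewrite exchange_big /= -sum_bool_card.
apply: leq_sum => g _.
case: (boolP [exists Gam, (Gam \in C) && wp E0 Gam g]) => [/existsP[G0 /andP[G0C wG0]] | none].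
- have gA : injectiveb g && (S \subset g @: [set: V0]).
    case/and3P: (wG0) => -> /eqP -> _ /=.
    move: G0C; rewrite inE => /andP[_ FG0].
    apply/subsetP => x /bigcupP[e eF xe]; apply/bigcupP; exists e => //.
    exact: (subsetP FG0).
  rewrite /= gA.
  apply: (@leq_trans (\sum_Gam (Gam == imE E0 g : nat))); last first.
    by rewrite sum_bool_card card1.
  rewrite [X in X <= _]big_mkcond /=; apply: leq_sum => Gam _.
  case: ifP => // GC; case: (boolP (wp E0 Gam g)) => //= w.
  move: GC; rewrite inE is_copyE => /andP[/andP[sub _] _].
  by rewrite (wp_imE HE0 sub w) eqxx.
- rewrite big1 // => Gam GC; case: (boolP (wp E0 Gam g)) => // w.
  by case/negP: none; apply/existsP; exists Gam; rewrite GC.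
Qed.

Local Close Scope ring_scope.
Local Open Scope ring_scope.

Lemma bigmin_le_seq (R : realFieldType) (T : eqType) (s : seq T) (P : pred T)
  (F : T -> R) x0 j :
  j \in s -> P j -> \big[Order.min/x0]_(i <- s | P i) F i <= F j.
Proof.
elim: s => // a s IH; rewrite inE big_cons => /orP[/eqP<-|js] Pj.
  by rewrite Pj ge_min lexx.
by case: (P a); rewrite ?ge_min IH ?orbT.
Qed.

Lemma psi_le (R : realFieldType) (V0 : finType) (E0 : {set {set V0}}) n (p : R) H :
  subgraph_ge1 E0 H -> Psi_min E0 n p <= n%:R ^+ #|H.1| * p ^+ #|H.2|.
Proof.
move=> sH; rewrite /Psi_min; apply: bigmin_le_seq => //.
Qed.

Lemma psi_gt0 (R : realFieldType) (V0 : finType) (E0 : {set {set V0}}) n (p : R) :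
  (0 < n)%N -> 0 < p -> 0 < Psi_min E0 n p.
Proof.
move=> n0 p0; rewrite /Psi_min; apply: (big_ind (fun x => 0 < x)).
- by rewrite mulr_gt0 // exprn_gt0 // ltr0n.
- by move=> x y x0 y0; rewrite lt_min x0 y0.
- by move=> i _; rewrite mulr_gt0 // exprn_gt0 // ltr0n.
Qed.

Lemma psi_ge0 (R : realFieldType) (V0 : finType) (E0 : {set {set V0}}) n (p : R) :
  0 < p -> 0 <= Psi_min E0 n p.
Proof.
move=> p0; rewrite /Psi_min; apply: (big_ind (fun x => 0 <= x)).
- by rewrite mulr_ge0 // exprn_ge0 // ?ler0n // ltW.
- by move=> x y x0 y0; rewrite le_min x0 y0.
- by move=> i _; rewrite mulr_ge0 // exprn_ge0 // ?ler0n // ltW.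
Qed.

Lemma psi_F (R : realFieldType) (V0 : finType) (E0 : {set {set V0}}) n (p : R)
  (HE0 : forall e, e \in E0 -> #|e| = 2%N) (Gam F : {set {set 'I_n}}) :
  (0 < n)%N -> 0 < p -> p <= 1 ->
  is_copy E0 Gam -> F \subset Gam -> F != set0 ->
  Psi_min E0 n p <= n%:R ^+ #|\bigcup_(e in F) e| * p ^+ #|F|.
Proof.
move=> n0 p0 p1; rewrite is_copyE => /andP[sub /existsP[f w]] FG Fn0.
have injf := wp_inj w.
have GE := wp_imE HE0 sub w.
set S := \bigcup_(e in F) e.
pose H := ([set x | f x \in S], [set e in E0 | [set f x | x in e] \in F]).
have sH : subgraph_ge1 E0 H.
  apply/and3P; split.
  - by apply/subsetP => e; rewrite inE => /andP[].
  - case/set0Pn: Fn0 => e' e'F.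
    have := subsetP FG e' e'F; rewrite GE => /imsetP[e eE De'].
    by apply/set0Pn; exists e; rewrite inE eE -De'.
  - apply/forallP => e; apply/implyP; rewrite inE => /andP[_ feF].
    apply/subsetP => x xe; rewrite inE; apply/bigcupP.
    by exists [set f x | x in e] => //; apply: imset_f.
apply: le_trans (@psi_le R V0 E0 n p H sH) _.
apply: ler_pM.
- by rewrite exprn_ge0 // ler0n.
- by rewrite exprn_ge0 // ltW.
- apply: ler_weXn2l; first by rewrite ler1n.
  rewrite /H /= -(card_imset _ injf).
  apply: subset_leq_card; apply/subsetP => y /imsetP[x]; rewrite inE => xS ->.
  exact: xS.
- apply: ler_wiXn2l => //; first exact: ltW.
  apply: leq_trans (leq_imset_card (fun e : {set V0} => [set f x | x in e]) _).
  apply: subset_leq_card; apply/subsetP => e' e'F.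
  have := subsetP FG e' e'F; rewrite GE => /imsetP[e eE De'].
  by apply/imsetP; exists e => //; rewrite inE eE -De'.
Qed.

Local Close Scope ring_scope.

Lemma NF_nat (V0 : finType) (E0 : {set {set V0}}) n (F : {set {set 'I_n}}) (x0 : V0)
  (HE0 : forall e, e \in E0 -> #|e| = 2) :
  Defs.aut E0 * NF E0 F * n ^ #|\bigcup_(e in F) e| <= #|V0|`! * n ^ #|V0|.
Proof.
set k := #|\bigcup_(e in F) e|.
have B := NF_bound F x0 HE0.
apply: leq_trans (leq_mul B (leqnn (n ^ k))) _; rewrite -/k -mulnA.
case: (leqP k #|V0|) => kv.
- rewrite -expnD subnK //; apply: leq_mul => //.
  rewrite -(ffact_fact kv); apply: leq_pmulr; exact: fact_gt0.
- by rewrite ffact_small.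
Qed.

Lemma NF0_nat (V0 : finType) (E0 : {set {set V0}}) n (x0 : V0)
  (HE0 : forall e, e \in E0 -> #|e| = 2) :
  Defs.aut E0 * NF E0 (set0 : {set {set 'I_n}}) <= n ^ #|V0|.
Proof.
have := NF_bound (set0 : {set {set 'I_n}}) x0 HE0.
have -> : \bigcup_(e in (set0 : {set {set 'I_n}})) e = set0.
  by apply/setP => x; rewrite inE; apply/bigcupP => -[e]; rewrite inE.
by rewrite cards0 ffactn0 subn0 mul1n.
Qed.

Local Open Scope ring_scope.

Lemma PF (R : realFieldType) (V0 : finType) (E0 : {set {set V0}}) n (p : R)
  (x0 : V0) (HE0 : forall e, e \in E0 -> #|e| = 2%N)
  (n0 : (0 < n)%N) (p0 : 0 < p) (p1 : p <= 1) (F : {set {set 'I_n}}) :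
  F != set0 ->
  (Defs.aut E0)%:R * (NF E0 F)%:R * p ^+ (#|E0| - #|F|) * Psi_min E0 n p
   <= (#|V0|`!)%:R * (n%:R ^+ #|V0| * p ^+ #|E0|).
Proof.
move=> Fn0.
have ge0 : 0 <= (Defs.aut E0)%:R * (NF E0 F)%:R * p ^+ (#|E0| - #|F|) :> R.
  by rewrite !mulr_ge0 ?ler0n // exprn_ge0 // ltW.
case: (posnP (NF E0 F)) => [->|NFp].
  rewrite mulr0 mul0r mul0r; apply: mulr_ge0; rewrite ?ler0n //.
  by rewrite mulr_ge0 // exprn_ge0 // ?ler0n // ltW.
move: NFp; rewrite /NF card_gt0 => /set0Pn[Gam]; rewrite inE => /andP[cG FG].
have FE : (#|F| <= #|E0|)%N by rewrite -(card_copy HE0 cG); exact: subset_leq_card.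
apply: le_trans (ler_wpM2l ge0 (psi_F HE0 n0 p0 p1 cG FG Fn0)) _.
set k := #|\bigcup_(e in F) e|.
have -> : (Defs.aut E0)%:R * (NF E0 F)%:R * p ^+ (#|E0| - #|F|) * (n%:R ^+ k * p ^+ #|F|)
   = ((Defs.aut E0 * NF E0 F * n ^ k)%N)%:R * p ^+ #|E0| :> R.
  rewrite -{2}(subnK FE) exprD !natrM natrX.
  set A := p ^+ _; set B := p ^+ _; set C := n%:R ^+ k; set D := (Defs.aut E0)%:R; set G := (NF E0 F)%:R.
  by rewrite -!mulrA; congr (_ * (_ * _)); rewrite mulrCA.
rewrite mulrA -natrX -natrM ler_wpM2r ?exprn_ge0 ?(ltW p0) // ler_nat.
exact: NF_nat.
Qed.

Local Close Scope ring_scope.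
Local Open Scope ring_scope.

Lemma PF0 (R : realFieldType) (V0 : finType) (E0 : {set {set V0}}) n (p : R)
  (x0 : V0) (HE0 : forall e, e \in E0 -> #|e| = 2%N) (p0 : 0 < p) :
  (Defs.aut E0)%:R * (NF E0 (set0 : {set {set 'I_n}}))%:R * p ^+ (#|E0| - #|(set0 : {set {set 'I_n}})|)
   <= n%:R ^+ #|V0| * p ^+ #|E0|.
Proof.
rewrite cards0 subn0 -natrM -natrX ler_wpM2r ?exprn_ge0 ?(ltW p0) // ler_nat.
exact: NF0_nat.
Qed.

Lemma PFmin (R : realFieldType) (V0 : finType) (E0 : {set {set V0}}) n (p : R)
  (x0 : V0) (HE0 : forall e, e \in E0 -> #|e| = 2%N)
  (n0 : (0 < n)%N) (p0 : 0 < p) (p1 : p <= 1) (F : {set {set 'I_n}}) :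
  (Defs.aut E0)%:R * (NF E0 F)%:R * p ^+ (#|E0| - #|F|) * Order.min (Psi_min E0 n p) 1
   <= (#|V0|`!)%:R * (n%:R ^+ #|V0| * p ^+ #|E0|).
Proof.
have ge0 : 0 <= (Defs.aut E0)%:R * (NF E0 F)%:R * p ^+ (#|E0| - #|F|) :> R.
  by rewrite !mulr_ge0 ?ler0n // exprn_ge0 // ltW.
have X0 : 0 <= n%:R ^+ #|V0| * p ^+ #|E0| :> R.
  by rewrite mulr_ge0 // exprn_ge0 // ?ler0n // ltW.
case: (eqVneq F set0) => [EF|Fn0].
- subst F.
  have m1 : Order.min (Psi_min E0 n p) 1 <= 1 by rewrite ge_min lexx orbT.
  apply: le_trans (ler_wpM2l ge0 m1) _; rewrite mulr1.
  apply: le_trans (@PF0 R V0 E0 n p x0 HE0 p0) _.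
  by apply: ler_peMl => //; rewrite ler1n fact_gt0.
- apply: (le_trans _ (PF x0 HE0 n0 p0 p1 Fn0)).
  by apply: (ler_wpM2l ge0); rewrite ge_min lexx.
Qed.

Local Close Scope ring_scope.
Local Open Scope ring_scope.

Lemma sum_gen (R : realFieldType) (V0 : finType) (E0 : {set {set V0}}) n (p : R)
  (HE0 : forall e, e \in E0 -> #|e| = 2%N) (p0 : 0 < p)
  (P : pred {set {set 'I_n}}) (k Y : R) (W : {set {set 'I_n}}) :
  0 <= k -> 0 <= Y ->
  (forall F : {set {set 'I_n}}, F \subset W -> P F ->
     (Defs.aut E0)%:R * (NF E0 F)%:R * p ^+ (#|E0| - #|F|) * k <= Y) ->
  (Defs.aut E0)%:R * k *
    (\sum_(Gam | is_copy E0 Gam && P (Gam :&: W)) p ^+ #|W :|: Gam|)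
  <= (2 ^ #|W|)%:R * p ^+ #|W| * Y.
Proof.
move=> k0 Y0 HF.
have pW0 : 0 <= p ^+ #|W| by rewrite exprn_ge0 // ltW.
have ak0 : 0 <= (Defs.aut E0)%:R * k :> R by rewrite mulr_ge0 // ler0n.
rewrite (partition_big (fun Gam => Gam :&: W) (fun F => (F \subset W) && P F)) /=;
  last by move=> G /andP[_ PG]; rewrite subsetIr PG.
rewrite mulr_sumr.
apply: (@le_trans _ _ (\sum_(F : {set {set 'I_n}} | (F \subset W) && P F) p ^+ #|W| * Y)).
  apply: ler_sum => F /andP[FW PF].
  rewrite (eq_bigr (fun _ => p ^+ #|W| * p ^+ (#|E0| - #|F|))); last first.
    move=> Gam /andP[/andP[cG _] /eqP GF].
    have FE : (#|F| <= #|E0|)%N.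
      by rewrite -(card_copy HE0 cG) -GF; apply: subset_leq_card; apply: subsetIl.
    rewrite -exprD; congr (p ^+ _).
    by rewrite cardsU setIC GF (card_copy HE0 cG) addnBA.
  rewrite sumr_const -(mulr_natr (p ^+ #|W| * _)).
  apply: (@le_trans _ _ ((Defs.aut E0)%:R * k * (p ^+ #|W| * p ^+ (#|E0| - #|F|) * (NF E0 F)%:R))).
    apply: (ler_wpM2l ak0); apply: ler_wpM2l; first by rewrite mulr_ge0 // exprn_ge0 // ltW.
    rewrite ler_nat /NF; apply: subset_leq_card; apply/subsetP => Gam.
    rewrite !inE => /andP[/andP[cG _] /eqP GF]; rewrite cG /= -GF; exact: subsetIl.
  have -> : (Defs.aut E0)%:R * k * (p ^+ #|W| * p ^+ (#|E0| - #|F|) * (NF E0 F)%:R)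
     = p ^+ #|W| * ((Defs.aut E0)%:R * (NF E0 F)%:R * p ^+ (#|E0| - #|F|) * k).
    set A := (Defs.aut E0)%:R; set B := p ^+ #|W|; set C := p ^+ _; set D := (NF E0 F)%:R.
    rewrite mulrCA -!mulrA; congr (_ * _); rewrite mulrCA; congr (_ * _).
    by rewrite mulrA mulrC.
  exact: (ler_wpM2l pW0 (HF F FW PF)).
apply: (@le_trans _ _ (\sum_(F in powerset W) p ^+ #|W| * Y)).
  rewrite big_mkcond [X in _ <= X]big_mkcond; apply: ler_sum => F _.
  rewrite powersetE; case: (F \subset W); case: (P F) => //=.
  by rewrite mulr_ge0.
by rewrite sumr_const card_powerset -mulrA mulr_natl.
Qed.

Local Close Scope ring_scope.

Definition ext (T : finType) k (h : {ffun 'I_k -> T}) (x : T) : {ffun 'I_k.+1 -> T} :=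
  [ffun i => if unlift ord_max i is Some j then h j else x].

Lemma widen_lift k (j : 'I_k) : widen_ord (leqnSn k) j = lift ord_max j.
Proof. by apply: val_inj; rewrite /= /bump leqNgt ltn_ord. Qed.

Lemma lift_max_val k (j : 'I_k) : (lift ord_max j : nat) = j.
Proof. by rewrite /= /bump leqNgt ltn_ord. Qed.

Lemma ext_lift (T : finType) k (h : {ffun 'I_k -> T}) x j : ext h x (lift ord_max j) = h j.
Proof. by rewrite ffunE liftK. Qed.

Lemma ext_widen (T : finType) k (h : {ffun 'I_k -> T}) x j :
  ext h x (widen_ord (leqnSn k) j) = h j.
Proof. by rewrite widen_lift ext_lift. Qed.

Lemma ext_max (T : finType) k (h : {ffun 'I_k -> T}) x : ext h x ord_max = x.
Proof. by rewrite ffunE unlift_none. Qed.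

Lemma ext_bij (T : finType) k :
  bijective (fun q : {ffun 'I_k -> T} * T => ext q.1 q.2).
Proof.
exists (fun f : {ffun 'I_k.+1 -> T} => ([ffun j : 'I_k => f (widen_ord (leqnSn k) j)], f ord_max)).
- case=> h x /=; congr pair; last exact: ext_max.
  by apply/ffunP => j; rewrite ffunE ext_widen.
- move=> f /=; apply/ffunP => i; rewrite ffunE.
  case: (unliftP ord_max i) => [j ->|->] //.
  by rewrite ffunE widen_lift.
Qed.

Lemma split_sum (R : realFieldType) (T : finType) k (P : pred {ffun 'I_k.+1 -> T})
  (g : {ffun 'I_k.+1 -> T} -> R) :
  (\sum_(f | P f) g f = \sum_(h : {ffun 'I_k -> T}) \sum_(x | P (ext h x)) g (ext h x))%R.
Proof.
rewrite (reindex (fun q : {ffun 'I_k -> T} * T => ext q.1 q.2)) /=;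
  last exact: onW_bij (ext_bij T k).
by rewrite pair_big_dep.
Qed.

Lemma union_ext n k (h : {ffun 'I_k -> {set {set 'I_n}}}) x :
  union_copies (ext h x) = union_copies h :|: x.
Proof.
rewrite /union_copies big_ord_recr /= ext_max; congr (_ :|: _).
by apply: eq_bigr => i _; rewrite ext_widen.
Qed.

Lemma conn_ext (V0 : finType) (E0 : {set {set V0}}) n k
  (h : {ffun 'I_k -> {set {set 'I_n}}}) x :
  conn_copies E0 (ext h x) ->
  [&& conn_copies E0 h, is_copy E0 x & (k == 0%N) || (union_copies h :&: x != set0)].
Proof.
move/forallP => H.
have mx := H ord_max; rewrite ext_max in mx; case/andP: mx => -> mx.
apply/andP; split.
- apply/forallP => j; have := H (lift ord_max j); rewrite ext_lift.
  rewrite lift_max_val; case/andP => -> /=; case/orP => [-> //| /existsP[j' /andP[lt ne]]].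
  apply/orP; right.
  case: (unliftP ord_max j') lt ne => [j'' ->|->].
    rewrite ext_lift lift_max_val => lt ne; apply/existsP; exists j''.
    by rewrite ne andbT.
  move=> lt; have := ltn_trans lt (ltn_ord j); by rewrite ltnn.
- case/orP: mx => [-> //| /existsP[j' /andP[lt ne]]].
  apply/orP; right.
  case: (unliftP ord_max j') lt ne => [j'' ->|->]; last by rewrite ltnn.
  rewrite ext_lift => _ /set0Pn[y]; rewrite inE => /andP[yh yx].
  apply/set0Pn; exists y; rewrite inE yx andbT.
  by apply/bigcupP; exists j''.
Qed.

Local Close Scope ring_scope.
Local Open Scope ring_scope.

Lemma sum_sub (R : realFieldType) (I : finType) (P Q : pred I) (g : I -> R) :
  (forall i, P i -> Q i) -> (forall i, Q i -> 0 <= g i) ->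
  \sum_(i | P i) g i <= \sum_(i | Q i) g i.
Proof.
move=> PQ g0; rewrite big_mkcond [X in _ <= X]big_mkcond; apply: ler_sum => i _.
case: (boolP (P i)) => Pi; first by rewrite (PQ _ Pi).
by case: (boolP (Q i)) => Qi //; exact: g0.
Qed.

Lemma card_union_le (V0 : finType) (E0 : {set {set V0}}) n k
  (HE0 : forall e, e \in E0 -> #|e| = 2%N) (h : {ffun 'I_k -> {set {set 'I_n}}}) :
  (forall i, is_copy E0 (h i)) -> (#|union_copies h| <= k * #|E0|)%N.
Proof.
rewrite /union_copies; elim: k h => [|k IH] h Hc.
  by rewrite big_ord0 cards0.
rewrite big_ord_recr /= mulSn addnC.
apply: leq_trans (leq_card_setU _ _) _; apply: leq_add.
  have E : \bigcup_(i < k) [ffun i => h (widen_ord (leqnSn k) i)] i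
        = \bigcup_(i < k) h (widen_ord (leqnSn k) i) by apply: eq_bigr => i _; rewrite ffunE.
  by rewrite -E; apply: IH => i; rewrite ffunE.
by rewrite (card_copy HE0 (Hc _)).
Qed.

Lemma conn_copy (V0 : finType) (E0 : {set {set V0}}) n k
  (h : {ffun 'I_k -> {set {set 'I_n}}}) : conn_copies E0 h -> forall i, is_copy E0 (h i).
Proof. by move/forallP => H i; case/andP: (H i). Qed.

Lemma c_succ (R : realFieldType) (V0 : finType) (E0 : {set {set V0}}) k :
  (0 < k)%N ->
  c_const R E0 k.+1 =
  c_const R E0 k * ((#|V0|`!)%:R * (2 ^ (k * #|E0|))%:R / (Defs.aut E0)%:R).
Proof.
case: k => // k _.
rewrite /c_const.
have -> : (k.+2 * (k.+2 - 1) %/ 2 = (k.+1 * (k.+1 - 1)) %/ 2 + k.+1)%N.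
  have -> : (k.+2 * (k.+2 - 1) = k.+1 * 2 + k.+1 * (k.+1 - 1))%N.
    by rewrite !subn1 /= -mulnDr add2n mulnC.
  by rewrite divnMDl // addnC.
have -> : (k.+2 - 1 = (k.+1 - 1).+1)%N by rewrite !subn1.
rewrite mulnDl exprD exprS exprSr.
have B0 : (Defs.aut E0)%:R != 0 :> R by rewrite pnatr_eq0 -lt0n aut_gt0.
have Bk0 : (Defs.aut E0)%:R ^+ k.+1 != 0 :> R by rewrite expf_neq0.
move: B0 Bk0.
move: ((Defs.aut E0)%:R ^+ k.+1) => Bk.
move: ((Defs.aut E0)%:R) => B.
move: ((#|V0|`!)%:R ^+ (k.+1 - 1)) => Ak.
move: ((#|V0|`!)%:R) => A.
move: (2 ^+ (k.+1 * (k.+1 - 1) %/ 2 * #|E0|)) => C.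
rewrite natrX.
move: ((2%:R : R) ^+ (k.+1 * #|E0|)) => D.
move=> B0 Bk0.
field. by rewrite B0 Bk0.
Qed.

Local Close Scope ring_scope.
Local Open Scope ring_scope.

Definition Xk (R : realFieldType) (V0 : finType) (E0 : {set {set V0}}) n (p : R) k :=
  n%:R ^+ (k * #|V0|) * p ^+ (k * #|E0|).

Lemma XkS (R : realFieldType) (V0 : finType) (E0 : {set {set V0}}) n (p : R) k :
  Xk E0 n p k.+1 = Xk E0 n p k * (n%:R ^+ #|V0| * p ^+ #|E0|).
Proof. by rewrite /Xk !mulSnr !exprD mulrACA. Qed.

Lemma identG (R : realFieldType) (V0 : finType) (E0 : {set {set V0}}) n (p : R) k (D Q : R) :
  (0 < k)%N -> D != 0 -> Q != 0 ->
  (2 ^ (k * #|E0|))%:R * ((#|V0|`!)%:R * (n%:R ^+ #|V0| * p ^+ #|E0|)) / ((Defs.aut E0)%:R * Q)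
   * (c_const R E0 k * Xk E0 n p k / D)
  = c_const R E0 k.+1 * Xk E0 n p k.+1 / (D * Q).
Proof.
move=> k0 D0 Q0.
rewrite c_succ // XkS.
have B0 : (Defs.aut E0)%:R != 0 :> R by rewrite pnatr_eq0 -lt0n aut_gt0.
move: B0 D0 Q0.
move: ((Defs.aut E0)%:R) => B.
move: ((#|V0|`!)%:R) => A.
move: (n%:R ^+ #|V0| * p ^+ #|E0|) => X.
move: ((2 ^ (k * #|E0|))%:R) => C.
move: (c_const R E0 k) (Xk E0 n p k) => c x.
move=> B0 D0 Q0.
field. by rewrite B0 D0 Q0.
Qed.

Local Close Scope ring_scope.
Local Open Scope ring_scope.

Lemma stepA (R : realFieldType) (V0 : finType) (E0 : {set {set V0}}) n (p : R)
  (x0 : V0) (HE0 : forall e, e \in E0 -> #|e| = 2%N)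
  (n0 : (0 < n)%N) (p0 : 0 < p) (p1 : p <= 1) (W : {set {set 'I_n}}) j :
  (#|W| <= j * #|E0|)%N ->
  \sum_(x | is_copy E0 x && (x :&: W != set0)) p ^+ #|W :|: x|
   <= p ^+ #|W| * ((2 ^ (j * #|E0|))%:R * ((#|V0|`!)%:R * (n%:R ^+ #|V0| * p ^+ #|E0|))
        / ((Defs.aut E0)%:R * Psi_min E0 n p)).
Proof.
move=> Wj.
have Ps0 := @psi_gt0 R V0 E0 n p n0 p0.
have aP : 0 < (Defs.aut E0)%:R * Psi_min E0 n p by rewrite mulr_gt0 // ltr0n aut_gt0.
have Y0 : 0 <= (#|V0|`!)%:R * (n%:R ^+ #|V0| * p ^+ #|E0|) :> R.
  by rewrite !mulr_ge0 ?ler0n // exprn_ge0 // ?ler0n // ltW.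
have pW0 : 0 <= p ^+ #|W| by rewrite exprn_ge0 // ltW.
have H := @sum_gen R V0 E0 n p HE0 p0 (fun F => F != set0) (Psi_min E0 n p)
   ((#|V0|`!)%:R * (n%:R ^+ #|V0| * p ^+ #|E0|)) W (ltW Ps0) Y0
   (fun F FW HF => PF x0 HE0 n0 p0 p1 HF).
rewrite !mulrA ler_pdivlMr // mulrC.
apply: le_trans H _.
rewrite -[X in _ <= X]mulrA -[X in _ <= X]mulrA (mulrC (p ^+ _)).
apply: ler_wpM2r => //; apply: ler_wpM2r => //.
by rewrite ler_nat leq_pexp2l.
Qed.

Lemma stepB (R : realFieldType) (V0 : finType) (E0 : {set {set V0}}) n (p : R)
  (x0 : V0) (HE0 : forall e, e \in E0 -> #|e| = 2%N)
  (n0 : (0 < n)%N) (p0 : 0 < p) (p1 : p <= 1) (W : {set {set 'I_n}}) j :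
  (#|W| <= j * #|E0|)%N ->
  \sum_(x | is_copy E0 x) p ^+ #|W :|: x|
   <= p ^+ #|W| * ((2 ^ (j * #|E0|))%:R * ((#|V0|`!)%:R * (n%:R ^+ #|V0| * p ^+ #|E0|))
        / ((Defs.aut E0)%:R * Order.min (Psi_min E0 n p) 1)).
Proof.
move=> Wj.
have Ps0 := @psi_gt0 R V0 E0 n p n0 p0.
have mn0 : 0 < Order.min (Psi_min E0 n p) 1 by rewrite lt_min Ps0 ltr01.
have aP : 0 < (Defs.aut E0)%:R * Order.min (Psi_min E0 n p) 1 by rewrite mulr_gt0 // ltr0n aut_gt0.
have Y0 : 0 <= (#|V0|`!)%:R * (n%:R ^+ #|V0| * p ^+ #|E0|) :> R.
  by rewrite !mulr_ge0 ?ler0n // exprn_ge0 // ?ler0n // ltW.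
have pW0 : 0 <= p ^+ #|W| by rewrite exprn_ge0 // ltW.
have H := @sum_gen R V0 E0 n p HE0 p0 predT (Order.min (Psi_min E0 n p) 1)
   ((#|V0|`!)%:R * (n%:R ^+ #|V0| * p ^+ #|E0|)) W (ltW mn0) Y0
   (fun F FW HF => PFmin x0 HE0 n0 p0 p1 F).
rewrite (eq_bigl (fun x => is_copy E0 x && predT (x :&: W))); last by move=> x; rewrite andbT.
rewrite !mulrA ler_pdivlMr // mulrC.
apply: le_trans H _.
rewrite -[X in _ <= X]mulrA -[X in _ <= X]mulrA (mulrC (p ^+ _)).
apply: ler_wpM2r => //; apply: ler_wpM2r => //.
by rewrite ler_nat leq_pexp2l.
Qed.

Lemma step0 (R : realFieldType) (V0 : finType) (E0 : {set {set V0}}) n (p : R)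
  (x0 : V0) (HE0 : forall e, e \in E0 -> #|e| = 2%N) (p0 : 0 < p) :
  \sum_(x | is_copy E0 x) p ^+ #|(set0 : {set {set 'I_n}}) :|: x|
   <= (n%:R ^+ #|V0| * p ^+ #|E0|) / (Defs.aut E0)%:R.
Proof.
have aP : 0 < (Defs.aut E0)%:R :> R by rewrite ltr0n aut_gt0.
have Y0 : 0 <= (n%:R ^+ #|V0| * p ^+ #|E0|) :> R.
  by rewrite !mulr_ge0 ?ler0n // exprn_ge0 // ?ler0n // ltW.
have H := @sum_gen R V0 E0 n p HE0 p0 predT 1
   (n%:R ^+ #|V0| * p ^+ #|E0|) set0 ler01 Y0.
rewrite (eq_bigl (fun x => is_copy E0 x && predT (x :&: set0))); last by move=> x; rewrite andbT.
rewrite ler_pdivlMr // mulrC -{1}[(Defs.aut E0)%:R]mulr1.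
apply: le_trans (H _) _.
  move=> F; rewrite subset0 => /eqP -> _; rewrite mulr1.
  exact: PF0.
by rewrite cards0 expr0 mulr1 expn0 mul1r.
Qed.

Local Close Scope ring_scope.
Local Open Scope ring_scope.

Lemma boundA (R : realFieldType) (V0 : finType) (E0 : {set {set V0}}) n (p : R)
  (x0 : V0) (HE0 : forall e, e \in E0 -> #|e| = 2%N)
  (n0 : (0 < n)%N) (p0 : 0 < p) (p1 : p <= 1) k :
  \sum_(M : {ffun 'I_k.+1 -> {set {set 'I_n}}} | conn_copies E0 M) p ^+ #|union_copies M|
  <= c_const R E0 k.+1 * Xk E0 n p k.+1 / Psi_min E0 n p ^+ k.
Proof.
have Ps0 := @psi_gt0 R V0 E0 n p n0 p0.
elim: k => [|k IH].
- rewrite split_sum.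
  apply: (@le_trans _ _ (\sum_(h : {ffun 'I_0 -> {set {set 'I_n}}})
      \sum_(x | is_copy E0 x) p ^+ #|(set0 : {set {set 'I_n}}) :|: x|)).
    apply: ler_sum => h _.
    rewrite (eq_bigr (fun x => p ^+ #|set0 :|: x|)); last first.
      by move=> x _; rewrite union_ext /union_copies big_ord0.
    apply: sum_sub => [x /conn_ext /and3P[] //|x _]; exact: exprn_ge0 (ltW p0).
  rewrite sumr_const card_ffun card_ord expn0 mulr1n.
  apply: le_trans (@step0 R V0 E0 n p x0 HE0 p0) _.
  rewrite /c_const /Xk expr0 divr1 !mul1n subnn div0n mul0n !expr0 !mul1r expr1.
  by rewrite mulrC.
rewrite split_sum.
set K := (2 ^ (k.+1 * #|E0|))%:R * ((#|V0|`!)%:R * (n%:R ^+ #|V0| * p ^+ #|E0|))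
        / ((Defs.aut E0)%:R * Psi_min E0 n p).
have K0 : 0 <= K.
  rewrite /K divr_ge0 // ?mulr_ge0 ?ler0n // ?exprn_ge0 ?ler0n // ?(ltW p0) //.
  by rewrite ltW.
apply: (@le_trans _ _ (\sum_(h : {ffun 'I_k.+1 -> {set {set 'I_n}}} | conn_copies E0 h)
     p ^+ #|union_copies h| * K)).
  rewrite [X in _ <= X]big_mkcond; apply: ler_sum => h _.
  rewrite (eq_bigr (fun x => p ^+ #|union_copies h :|: x|)); last first.
    by move=> x _; rewrite union_ext.
  case: (boolP (conn_copies E0 h)) => ch.
  + apply: le_trans (stepA x0 HE0 n0 p0 p1 (card_union_le HE0 (conn_copy ch))).
    apply: sum_sub => [x /conn_ext /and3P[_ -> /=]|x _]; last exact: exprn_ge0 (ltW p0).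
    by rewrite setIC.
  + by rewrite big_pred0 // => x; apply/negP => /conn_ext; rewrite (negbTE ch).
rewrite -mulr_suml.
apply: le_trans (ler_wpM2r K0 IH) _.
rewrite mulrC /K identG //; last by rewrite gt_eqF.
  by rewrite exprSr.
by rewrite expf_neq0 // gt_eqF.
Qed.

Local Close Scope ring_scope.
Local Open Scope ring_scope.

Lemma boundG (R : realFieldType) (V0 : finType) (E0 : {set {set V0}}) n (p : R)
  (x0 : V0) (HE0 : forall e, e \in E0 -> #|e| = 2%N)
  (n0 : (0 < n)%N) (p0 : 0 < p) (p1 : p <= 1) m' j (U : {set {set 'I_n}}) :
  (#|U| <= m'.+1 * #|E0|)%N ->
  c_const R E0 m'.+1 * Xk E0 n p m'.+1 / Psi_min E0 n p ^+ m' *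
  \sum_(Mh : {ffun 'I_j.+1 -> {set {set 'I_n}}} | conn_copies E0 Mh)
      p ^+ #|U :|: union_copies Mh|
  <= p ^+ #|U| * (c_const R E0 (m'.+1 + j.+1) * Xk E0 n p (m'.+1 + j.+1)
                   / (Psi_min E0 n p ^+ (m' + j) * Order.min (Psi_min E0 n p) 1)).
Proof.
move=> Um.
have Ps0 := @psi_gt0 R V0 E0 n p n0 p0.
have mn0 : 0 < Order.min (Psi_min E0 n p) 1 by rewrite lt_min Ps0 ltr01.
have aut0 : 0 < (Defs.aut E0)%:R :> R by rewrite ltr0n aut_gt0.
have X0 : 0 <= n%:R ^+ #|V0| * p ^+ #|E0| :> R.
  by rewrite mulr_ge0 // exprn_ge0 // ?ler0n // ltW.
have c0 k : 0 <= c_const R E0 k.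
  by rewrite /c_const divr_ge0 ?mulr_ge0 ?exprn_ge0 ?ler0n ?ler0n //.
have Xk0 k : 0 <= Xk E0 n p k.
  by rewrite /Xk mulr_ge0 // exprn_ge0 // ?ler0n // ltW.
have Km0 : 0 <= c_const R E0 m'.+1 * Xk E0 n p m'.+1 / Psi_min E0 n p ^+ m'.
  by apply: divr_ge0; [apply: mulr_ge0 | apply: exprn_ge0; exact: ltW].
elim: j U Um => [|j IH] U Um.
- rewrite split_sum.
  set K' := (2 ^ (m'.+1 * #|E0|))%:R * ((#|V0|`!)%:R * (n%:R ^+ #|V0| * p ^+ #|E0|))
        / ((Defs.aut E0)%:R * Order.min (Psi_min E0 n p) 1).
  apply: (@le_trans _ _ (c_const R E0 m'.+1 * Xk E0 n p m'.+1 / Psi_min E0 n p ^+ m' *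
          (p ^+ #|U| * K'))).
    apply: ler_wpM2l => //.
    apply: (@le_trans _ _ (\sum_(h : {ffun 'I_0 -> {set {set 'I_n}}})
      \sum_(x | is_copy E0 x) p ^+ #|U :|: x|)).
      apply: ler_sum => h _.
      rewrite (eq_bigr (fun x => p ^+ #|U :|: x|)); last first.
        by move=> x _; rewrite union_ext /union_copies big_ord0 set0U.
      apply: sum_sub => [x /conn_ext /and3P[] //|x _]; exact: exprn_ge0 (ltW p0).
    rewrite sumr_const card_ffun card_ord expn0 mulr1n.
    exact: (stepB x0 HE0 n0 p0 p1 Um).
  rewrite mulrCA; apply: ler_wpM2l; first by rewrite exprn_ge0 // ltW.
  rewrite mulrC /K' identG //; last by rewrite gt_eqF.
    by rewrite addn0 addn1.
  by rewrite expf_neq0 // gt_eqF.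
- set Km := c_const R E0 m'.+1 * Xk E0 n p m'.+1 / Psi_min E0 n p ^+ m'.
  set K := (2 ^ ((m'.+1 + j.+1) * #|E0|))%:R * ((#|V0|`!)%:R * (n%:R ^+ #|V0| * p ^+ #|E0|))
        / ((Defs.aut E0)%:R * Psi_min E0 n p).
  have K0 : 0 <= K.
    apply: divr_ge0; last by apply: mulr_ge0; [exact: ltW | exact: ltW].
    by apply: mulr_ge0; [rewrite ler0n | apply: mulr_ge0; rewrite ?ler0n].
  rewrite split_sum.
  apply: (@le_trans _ _ (Km * (\sum_(h : {ffun 'I_j.+1 -> {set {set 'I_n}}} | conn_copies E0 h)
      p ^+ #|U :|: union_copies h| * K))).
    apply: (ler_wpM2l Km0).
    rewrite [X in _ <= X]big_mkcond; apply: ler_sum => h _.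
    rewrite (eq_bigr (fun x => p ^+ #|(U :|: union_copies h) :|: x|)); last first.
      by move=> x _; rewrite union_ext setUA.
    case: (boolP (conn_copies E0 h)) => ch.
    + have Wb : (#|U :|: union_copies h| <= (m'.+1 + j.+1) * #|E0|)%N.
        apply: leq_trans (leq_card_setU _ _) _; rewrite mulnDl; apply: leq_add => //.
        have := card_union_le HE0 (conn_copy ch); by [].
      apply: le_trans (stepA x0 HE0 n0 p0 p1 Wb).
      apply: sum_sub => [x /conn_ext /and3P[_ -> /=] |x _]; last exact: exprn_ge0 (ltW p0).
      move=> /set0Pn[y]; rewrite !inE => /andP[yh yx]; apply/set0Pn; exists y.
      by rewrite !inE yx yh orbT.
    + by rewrite big_pred0 // => x; apply/negP => /conn_ext; rewrite (negbTE ch).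
  rewrite -mulr_suml mulrA (mulrC _ K) -mulrA.
  apply: le_trans (ler_wpM2l K0 (IH U Um)) _.
  rewrite mulrCA; apply: ler_wpM2l; first by rewrite exprn_ge0 // ltW.
  rewrite /K identG //.
  + by rewrite -addnS (addnS m' j) exprSr mulrA [in X in _ <= X](mulrAC (Psi_min E0 n p ^+ (m' + j))).
  + by rewrite mulf_neq0 ?expf_neq0 ?gt_eqF.
  + by rewrite gt_eqF.
Qed.

Local Close Scope ring_scope.
Local Open Scope ring_scope.

Theorem lemma5p5 (R : realFieldType) (V0 : finType) (E0 : {set {set V0}})
  (n : nat) (p : R) (m mh : nat)
  (HE0 : forall e, e \in E0 -> #|e| = 2%N)
  (Hedge : E0 != set0)
  (Hnoiso : forall v : V0, exists2 e, e \in E0 & v \in e)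
  (Hp0 : 0 < p) (Hp1 : p < 1)
  (Hm : (0 < m)%N) (Hmh : (0 < mh)%N) :
  (\sum_(M : {ffun 'I_m -> {set {set 'I_n}}} | conn_copies E0 M)
      p ^+ #|union_copies M|
   <= c_const R E0 m * (n%:R ^+ (m * #|V0|) * p ^+ (m * #|E0|))
        / Psi_min E0 n p ^+ (m - 1))
  /\
  (\sum_(M : {ffun 'I_m -> {set {set 'I_n}}} | conn_copies E0 M)
     \sum_(Mh : {ffun 'I_mh -> {set {set 'I_n}}} | conn_copies E0 Mh)
      p ^+ #|union_copies M :|: union_copies Mh|
   <= c_const R E0 (m + mh) *
        (n%:R ^+ ((m + mh) * #|V0|) * p ^+ ((m + mh) * #|E0|))
        / (Psi_min E0 n p ^+ (m + mh - 2) * Order.min (Psi_min E0 n p) 1)).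
Proof.
have [x0 _] : exists x0 : V0, True.
  case/set0Pn: Hedge => e eE.
  have /card_gt0P [x _] : (0 < #|e|)%N by rewrite HE0.
  by exists x.
case: m Hm => // m' _; case: mh Hmh => // j _.
have p1 : p <= 1 by exact: ltW.
have c0 k : 0 <= c_const R E0 k.
  rewrite /c_const; apply: divr_ge0; last by apply: exprn_ge0; rewrite ler0n.
  by apply: mulr_ge0; apply: exprn_ge0; rewrite ?ler0n.
have Xk0 k : 0 <= Xk E0 n p k.
  by rewrite /Xk mulr_ge0 // exprn_ge0 // ?ler0n // ltW.
have Psge0 := @psi_ge0 R V0 E0 n p Hp0.
have e1 : (m'.+1 - 1 = m')%N by rewrite subn1.
have e2 : (m'.+1 + j.+1 - 2 = m' + j)%N by rewrite addSn addnS subSS subSS subn0.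
rewrite e1 e2.
case: (posnP n) => [n0|n0].
- subst n.
  have noc (Gam : {set {set 'I_0}}) : ~~ is_copy E0 Gam.
    rewrite is_copyE; apply/negP => /andP[_ /existsP[f _]].
    by case: (f x0) => i; rewrite ltn0.
  have noM k (M : {ffun 'I_k.+1 -> {set {set 'I_0}}}) : conn_copies E0 M = false.
    apply/negP => /forallP /(_ ord0) /andP[c _]; by move: (noc (M ord0)); rewrite c.
  rewrite !big_pred0 //; split.
  + by apply: divr_ge0; [apply: mulr_ge0; [exact: c0 | exact: Xk0] | exact: exprn_ge0].
  + apply: divr_ge0; first by apply: mulr_ge0; [exact: c0 | exact: Xk0].
    by apply: mulr_ge0; [apply: exprn_ge0 | rewrite le_min Psge0 ler01].
have Ps0 := @psi_gt0 R V0 E0 n p n0 Hp0.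
have HA := @boundA R V0 E0 n p x0 HE0 n0 Hp0 p1 m'.
split; first exact: HA.
set Km := c_const R E0 m'.+1 * Xk E0 n p m'.+1 / Psi_min E0 n p ^+ m'.
have Kmpos : 0 < Km.
  rewrite /Km /c_const /Xk; apply: divr_gt0; last by apply: exprn_gt0.
  apply: mulr_gt0; last by apply: mulr_gt0; apply: exprn_gt0; rewrite ?ltr0n.
  apply: divr_gt0; last by apply: exprn_gt0; rewrite ltr0n aut_gt0.
  by apply: mulr_gt0; apply: exprn_gt0; rewrite ?ltr0n ?fact_gt0.
set T := c_const R E0 (m'.+1 + j.+1) * Xk E0 n p (m'.+1 + j.+1)
     / (Psi_min E0 n p ^+ (m' + j) * Order.min (Psi_min E0 n p) 1).
have T0 : 0 <= T.
  apply: divr_ge0; first by apply: mulr_ge0.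
  by apply: mulr_ge0; [apply: exprn_ge0; exact: ltW | rewrite le_min ltW // ler01].
change (\sum_(M : {ffun 'I_m'.+1 -> {set {set 'I_n}}} | conn_copies E0 M)
     \sum_(Mh : {ffun 'I_j.+1 -> {set {set 'I_n}}} | conn_copies E0 Mh)
      p ^+ #|union_copies M :|: union_copies Mh| <= T).
rewrite -(ler_pM2l Kmpos) mulr_sumr.
apply: (@le_trans _ _ (\sum_(M : {ffun 'I_m'.+1 -> {set {set 'I_n}}} | conn_copies E0 M)
     p ^+ #|union_copies M| * T)).
  apply: ler_sum => M cM.
  exact: (boundG x0 HE0 n0 Hp0 p1 j (card_union_le HE0 (conn_copy cM))).
rewrite -mulr_suml mulrC [X in _ <= X]mulrC.
by apply: ler_wpM2l.
Qed.
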